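(* Let $\mathfrak{g}$ be a Leibniz algebra. Then $Z^{*}_{\mathrm{Lie}}(\mathfrak{g})=0$ if and only if for every non-zero $x\in Z_{\mathrm{Lie}}(\mathfrak{g})$ the natural map $\sigma_x:\mathcal{M}^{\mathrm{Lie}}(\mathfrak{g})\to\mathcal{M}^{\mathrm{Lie}}(\mathfrak{g}/\langle x\rangle)$ has non-trivial kernel, where $\langle x\rangle$ is the two-sided ideal generated by $x$.
   Context: Fix a field $\mathbb{K}$ with $\frac12\in\mathbb{K}$. A Leibniz algebra is a $\mathbb{K}$-vector space with a bilinear bracket satisfying $[x,[y,z]]=[[x,y],z]-[[x,z],y]$. $[\mathfrak{m},\mathfrak{n}]_{\mathrm{Lie}}$ is the span of all $[m,n]+[n,m]$. $Z_{\mathrm{Lie}}(\mathfrak{g})=\{z:[q,z]+[z,q]=0\ \forall q\in\mathfrak{g}\}$. A surjective homomorphism $f:\mathfrak{h}\to\mathfrak{g}$ is a $\mathrm{Lie}$-central extension if $\ker f\subseteq Z_{\mathrm{Lie}}(\mathfrak{h})$. The precise $\mathrm{Lie}$-center $Z^{*}_{\mathrm{Lie}}(\mathfrak{g})$ is the intersection of all $f(Z_{\mathrm{Lie}}(\mathfrak{h}))$ over all $\mathrm{Lie}$-central extensions $f:\mathfrak{h}\twoheadrightarrow\mathfrak{g}$. For a free presentation $0\to\mathfrak{r}\to\mathfrak{f}\to\mathfrak{g}\to0$ ($\mathfrak{f}$ free Leibniz), $\mathcal{M}^{\mathrm{Lie}}(\mathfrak{g})=\frac{\mathfrak{r}\cap[\mathfrak{f},\mathfrak{f}]_{\mathrm{Lie}}}{[\mathfrak{f},\mathfrak{r}]_{\mathrm{Lie}}}$;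 it is functorial, and the natural map $\sigma_x$ is the one induced by the quotient $\mathfrak{g}\to\mathfrak{g}/\langle x\rangle$ (with $\mathfrak{s}\subseteq\mathfrak{f}$ the preimage of $\langle x\rangle$, it sends $y+[\mathfrak{f},\mathfrak{r}]_{\mathrm{Lie}}$ to $y+[\mathfrak{f},\mathfrak{s}]_{\mathrm{Lie}}$). *)

(* Defs.v *)
From HB Require Import structures.
From mathcomp Require Import all_boot all_order all_algebra.
Set Implicit Arguments.
Unset Strict Implicit.
Unset Printing Implicit Defensive.
Import GRing.Theory.
Local Open Scope ring_scope.

Record leibniz (K : fieldType) := Leibniz {
  Lcar :> lmodType K;
  bra : Lcar -> Lcar -> Lcar;
  bra_linl : forall (a : K) (x y z : Lcar), bra (a *: x + y) z = a *: bra x z + bra y z;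
  bra_linr : forall (a : K) (x y z : Lcar), bra z (a *: x + y) = a *: bra z x + bra z y;
  bra_leibniz : forall x y z : Lcar, bra x (bra y z) = bra (bra x y) z - bra (bra x z) y
}.
Arguments bra {K} l _ _.

Section Defs.
Variable K : fieldType.

Definition span (V : lmodType K) (S : V -> Prop) : V -> Prop :=
  fun v => exists (n : nat) (a : 'I_n -> K) (w : 'I_n -> V),
      (forall i, S (w i)) /\ v = \sum_(i < n) a i *: w i.

Definition lie_br (g : leibniz K) (M N : g -> Prop) : g -> Prop :=
  span (fun v => exists m n, M m /\ N n /\ v = bra g m n + bra g n m).

Definition ZLie (g : leibniz K) : g -> Prop :=
  fun z => forall q, bra g q z + bra g z q = 0.

Definition is_hom (h g : leibniz K) (f : h -> g) : Prop :=
  (forall (a : K) (x y : h), f (a *: x + y) = a *: f x + f y) /\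
  (forall x y : h, f (bra h x y) = bra g (f x) (f y)).

Definition surj (A B : Type) (f : A -> B) : Prop := forall b, exists a, f a = b.

Definition lie_central_ext (h g : leibniz K) (f : h -> g) : Prop :=
  is_hom f /\ surj f /\ (forall y, f y = 0 -> ZLie y).

Definition precise_ZLie (g : leibniz K) : g -> Prop :=
  fun z => forall (h : leibniz K) (f : h -> g), lie_central_ext f ->
    exists w, ZLie w /\ f w = z.

Definition is_ideal (g : leibniz K) (I : g -> Prop) : Prop :=
  I 0 /\ (forall (a : K) x y, I x -> I y -> I (a *: x + y)) /\
  (forall q y, I y -> I (bra g q y) /\ I (bra g y q)).

Definition gen_ideal (g : leibniz K) (x : g) : g -> Prop :=
  fun y => forall I, is_ideal I -> I x -> I y.

Definition is_free (X : Type) (F : leibniz K) (iota : X -> F) : Prop :=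
  forall (h : leibniz K) (phi : X -> h),
    exists psi : F -> h, is_hom psi /\ (forall u, psi (iota u) = phi u) /\
      (forall psi' : F -> h, is_hom psi' -> (forall u, psi' (iota u) = phi u) ->
         forall y, psi' y = psi y).

(* Given a free presentation 0 -> r -> F -pi-> g -> 0, with r = ker pi and
   s = pi^{-1}(<x>) (so F ->> g/<x> is a free presentation with kernel s),
   M^Lie(g) = (r ∩ [F,F]_Lie)/[F,r]_Lie, M^Lie(g/<x>) = (s ∩ [F,F]_Lie)/[F,s]_Lie
   and sigma_x (y + [F,r]_Lie) = y + [F,s]_Lie.  The kernel of sigma_x is
   non-trivial iff some class y + [F,r]_Lie is non-zero but maps to zero: *)
Definition sigma_ker_nontrivial (F g : leibniz K) (pi : F -> g) (x : g) : Prop :=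
  let r := fun y => pi y = 0 in
  let s := fun y => gen_ideal x (pi y) in
  exists y : F, r y /\ lie_br (fun _ => True) (fun _ => True) y /\
    ~ lie_br (fun _ => True) r y /\ lie_br (fun _ => True) s y.

End Defs.

(* Main.v *)
Require Import Defs.
From HB Require Import structures.
From mathcomp Require Import all_boot all_order all_algebra.
From Stdlib Require Import ClassicalEpsilon FunctionalExtensionality PropExtensionality Classical.
Set Implicit Arguments. Unset Strict Implicit. Unset Printing Implicit Defensive.
Import GRing.Theory.
Local Open Scope ring_scope.


Record subsp (K : fieldType) (V : lmodType K) := Subsp {
  sW : V -> Prop;
  sW0 : sW 0;
  sWcl : forall (a : K) x y, sW x -> sW y -> sW (a *: x + y) }.

Section WLemmas.
Variable K : fieldType.
Variable V : lmodType K.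
Variable W : V -> Prop.
Hypothesis W0 : W 0.
Hypothesis Wcl : forall (a : K) x y, W x -> W y -> W (a *: x + y).
Lemma WD x y : W x -> W y -> W (x + y).
Proof. by move=> ??; rewrite -[x]scale1r; apply Wcl. Qed.
Lemma WZ a x : W x -> W (a *: x).
Proof. by move=> ?; rewrite -[_ *: _]addr0; apply: Wcl. Qed.
Lemma WN x : W x -> W (- x).
Proof. by move=> ?; rewrite -scaleN1r; apply WZ. Qed.
Lemma WB x y : W x -> W y -> W (x - y).
Proof. by move=>??; apply WD => //; apply WN. Qed.
End WLemmas.

Section Quot.
Variable K : fieldType.
Variable V : lmodType K.
Variable S : subsp V.
Local Notation W := (sW S).
Let W0 := sW0 S.
Let Wcl := @sWcl _ _ S.

Definition canon (v : V) : V := epsilon (inhabits 0) (fun u => W (u - v)).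
Lemma canonP v : W (canon v - v).
Proof. rewrite /canon; apply: (epsilon_spec (inhabits 0) (fun u => W (u - v))); exists v; by rewrite subrr. Qed.
Lemma canon_eq v v' : W (v - v') -> canon v = canon v'.
Proof.
move=> H; rewrite /canon; f_equal; apply: functional_extensionality => u.
apply: propositional_extensionality; split => Hu.
- have -> : u - v' = (u - v) + (v - v') by rewrite addrA subrK.
  exact: (WD Wcl Hu H).
- have -> : u - v = (u - v') - (v - v') by rewrite opprB addrA subrK.
  exact: (WB W0 Wcl Hu H).
Qed.
Lemma canon_idem v : canon (canon v) = canon v.
Proof. apply canon_eq, canonP. Qed.
Lemma canon_W v v' : canon v = canon v' -> W (v - v').
Proof.
move=> E; have -> : v - v' = (canon v' - v') - (canon v - v).
  by rewrite E opprB [RHS]addrC addrA subrK.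
exact: (WB W0 Wcl (canonP _) (canonP _)).
Qed.

Record Q := MkQ { qval : V; qvalP : canon qval == qval }.
HB.instance Definition _ := [isSub for qval].
HB.instance Definition _ := [Choice of Q by <:].

Definition cl (v : V) : Q := MkQ (introT eqP (canon_idem v)).
Lemma cl_eq v v' : (cl v = cl v') <-> W (v - v').
Proof.
split=> [E|H]; first by apply: canon_W; exact: (congr1 qval E).
by apply: val_inj => /=; apply: canon_eq.
Qed.
Lemma clK q : cl (qval q) = q.
Proof. by apply: val_inj => /=; apply/eqP; exact: (qvalP q). Qed.
Lemma Qind (P : Q -> Prop) : (forall v, P (cl v)) -> forall q, P q.
Proof. by move=> H q; rewrite -(clK q). Qed.

Definition qzero := cl 0.
Definition qopp q := cl (- qval q).
Definition qadd p q := cl (qval p + qval q).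
Definition qscale (a : K) q := cl (a *: qval q).

Lemma qaddE x y : qadd (cl x) (cl y) = cl (x + y).
Proof.
apply/cl_eq => /=.
have -> : canon x + canon y - (x + y) = (canon x - x) + (canon y - y).
  by rewrite opprD addrACA.
exact: (WD Wcl (canonP _) (canonP _)).
Qed.
Lemma qoppE x : qopp (cl x) = cl (- x).
Proof.
apply/cl_eq => /=; rewrite opprK addrC -opprB; exact: (WN W0 Wcl (canonP _)).
Qed.
Lemma qscaleE a x : qscale a (cl x) = cl (a *: x).
Proof.
apply/cl_eq => /=; rewrite -scalerBr; exact: (WZ W0 Wcl _ (canonP _)).
Qed.

Lemma qaddA : associative qadd.
Proof. by elim/Qind=> x; elim/Qind=> y; elim/Qind=> z; rewrite !qaddE addrA. Qed.
Lemma qaddC : commutative qadd.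
Proof. by elim/Qind=> x; elim/Qind=> y; rewrite !qaddE addrC. Qed.
Lemma qadd0 : left_id qzero qadd.
Proof. by elim/Qind=> x; rewrite /qzero qaddE add0r. Qed.
Lemma qaddN : left_inverse qzero qopp qadd.
Proof. by elim/Qind=> x; rewrite qoppE qaddE addNr. Qed.

HB.instance Definition _ := GRing.isZmodule.Build Q qaddA qaddC qadd0 qaddN.

Lemma qscaleA a b v : qscale a (qscale b v) = qscale (a * b) v.
Proof. by elim/Qind: v => x; rewrite !qscaleE scalerA. Qed.
Lemma qscale1 : left_id 1 qscale.
Proof. by elim/Qind=> x; rewrite qscaleE scale1r. Qed.
Lemma qscaleDr : right_distributive qscale +%R.
Proof. by move=> a; elim/Qind=> x; elim/Qind=> y; rewrite /GRing.add /= qaddE !qscaleE qaddE scalerDr. Qed.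
Lemma qscaleDl v : {morph qscale^~ v: a b / a + b}.
Proof. by elim/Qind: v => x a b; rewrite /GRing.add /= !qscaleE qaddE scalerDl. Qed.

HB.instance Definition _ := GRing.Zmodule_isLmodule.Build K Q qscaleA qscale1 qscaleDr qscaleDl.

Lemma clD x y : cl (x + y) = cl x + cl y.
Proof. by rewrite -qaddE. Qed.
Lemma clZ a x : cl (a *: x) = a *: cl x.
Proof. by rewrite -qscaleE. Qed.
Lemma clN x : cl (- x) = - cl x.
Proof. by rewrite -qoppE. Qed.
Lemma cl0 : cl 0 = 0.
Proof. by []. Qed.
Lemma cl_eq0 v : cl v = 0 <-> W v.
Proof. by rewrite -cl0 cl_eq subr0. Qed.
End Quot.



Lemma zid1 (M : zmodType) (A B C D : M) : (A + B) + (C + D) = (A + D) + (B + C).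
Proof. by rewrite [RHS]addrACA [D + C]addrC. Qed.
Lemma zid2 (M : zmodType) (A B D E : M) : (A - B) + (- E + D) = (A + D) - (B + E).
Proof. by rewrite opprD [- E + D]addrC addrACA. Qed.
Lemma zid3 (M : zmodType) (A B : M) : (A - B) + (B - A) = 0.
Proof. by rewrite addrC addrA subrK subrr. Qed.

Section Bil.
Variable K : fieldType.
Variable L : leibniz K.
Local Notation br := (bra L).
Lemma braDl x y z : br (x + y) z = br x z + br y z.
Proof. by have := bra_linl 1 x y z; rewrite !scale1r. Qed.
Lemma braDr x y z : br z (x + y) = br z x + br z y.
Proof. by have := bra_linr 1 x y z; rewrite !scale1r. Qed.
Lemma bra0l z : br 0 z = 0.
Proof.
have := braDl 0 0 z; rewrite addr0 => /(congr1 (fun t => t - br 0 z)).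
by rewrite subrr addrK.
Qed.
Lemma bra0r z : br z 0 = 0.
Proof.
have := braDr 0 0 z; rewrite addr0 => /(congr1 (fun t => t - br z 0)).
by rewrite subrr addrK.
Qed.
Lemma braZl a x z : br (a *: x) z = a *: br x z.
Proof. by have := bra_linl a x 0 z; rewrite addr0 bra0l addr0. Qed.
Lemma braZr a x z : br z (a *: x) = a *: br z x.
Proof. by have := bra_linr a x 0 z; rewrite addr0 bra0r addr0. Qed.
Lemma braNl x z : br (- x) z = - br x z.
Proof. by rewrite -scaleN1r braZl scaleN1r. Qed.
Lemma braNr x z : br z (- x) = - br z x.
Proof. by rewrite -scaleN1r braZr scaleN1r. Qed.
Lemma braBl x y z : br (x - y) z = br x z - br y z.
Proof. by rewrite braDl braNl. Qed.
Lemma braBr x y z : br z (x - y) = br z x - br z y.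
Proof. by rewrite braDr braNr. Qed.
Lemma bra_leib' x y z : br (br x y) z = br x (br y z) + br (br x z) y.
Proof. by rewrite bra_leibniz subrK. Qed.
Lemma bra_sym_r x y z : br x (br y z + br z y) = 0.
Proof. by rewrite braDr (bra_leibniz x y z) (bra_leibniz x z y) zid3. Qed.
Lemma bra_sym_l f r x :
  br (br f r + br r f) x = (br f (br r x) + br (br r x) f) + (br (br f x) r + br r (br f x)).
Proof. by rewrite braDl (bra_leib' f r x) (bra_leib' r f x) zid1. Qed.
Lemma bra_sym_ideal a t b :
  br a (br t b) + br (br t b) a = br (br a t + br t a) b - (br (br a b) t + br t (br a b)).
Proof.
have E3 := bra_sym_r t a b.
rewrite braDr in E3.
have EC : br t (br b a) = - br t (br a b).
  by apply/eqP; rewrite -subr_eq0 opprK addrC E3.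
by rewrite (bra_leibniz a t b) (bra_leib' t b a) braDl EC zid2.
Qed.
End Bil.

Section LQuot.
Variable K : fieldType.
Variable L : leibniz K.
Variable S : subsp L.
Local Notation W := (sW S).
Hypothesis HI : forall q y, W y -> W (bra L q y) /\ W (bra L y q).
Let W0 := sW0 S.
Let Wcl := @sWcl _ _ S.

Definition Qb (p q : Q S) : Q S := cl S (bra L (qval p) (qval q)).
Lemma QbE x y : Qb (cl S x) (cl S y) = cl S (bra L x y).
Proof.
apply/cl_eq => /=.
have -> : bra L (canon S x) (canon S y) - bra L x y =
   bra L (canon S x - x) (canon S y) + bra L x (canon S y - y).
  by rewrite braBl braBr addrA subrK.
apply: (WD Wcl); [exact: (HI _ (canonP S x)).2 | exact: (HI _ (canonP S y)).1].
Qed.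

Lemma Qb_linl (a : K) (x y z : Q S) : Qb (a *: x + y) z = a *: Qb x z + Qb y z.
Proof.
elim/Qind: x => x; elim/Qind: y => y; elim/Qind: z => z.
by rewrite -clZ -clD !QbE bra_linl clD clZ.
Qed.
Lemma Qb_linr (a : K) (x y z : Q S) : Qb z (a *: x + y) = a *: Qb z x + Qb z y.
Proof.
elim/Qind: x => x; elim/Qind: y => y; elim/Qind: z => z.
by rewrite -clZ -clD !QbE bra_linr clD clZ.
Qed.
Lemma Qb_leib (x y z : Q S) : Qb x (Qb y z) = Qb (Qb x y) z - Qb (Qb x z) y.
Proof.
elim/Qind: x => x; elim/Qind: y => y; elim/Qind: z => z.
by rewrite !QbE bra_leibniz clD clN.
Qed.

Definition QL : leibniz K := Leibniz Qb_linl Qb_linr Qb_leib.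
End LQuot.


Section Span.
Variable K : fieldType.
Variable V : lmodType K.

Lemma span0 (S : V -> Prop) : Defs.span S 0.
Proof. by exists 0%N, (fun _ => 0), (fun _ => 0); split=> [[]//|]; rewrite big_ord0. Qed.

Lemma span1 (S : V -> Prop) v : S v -> Defs.span S v.
Proof.
move=> Sv; exists 1%N, (fun _ => 1), (fun _ => v); split=> // .
by rewrite big_ord1 scale1r.
Qed.

Lemma spancl (S : V -> Prop) (a : K) x y : Defs.span S x -> Defs.span S y -> Defs.span S (a *: x + y).
Proof.
case=> n [a1 [w1 [H1 ->]]] [m [a2 [w2 [H2 ->]]]].
exists (n + m)%N,
  (fun i => match split i with inl j => a * a1 j | inr j => a2 j end),
  (fun i => match split i with inl j => w1 j | inr j => w2 j end).
split.
  by move=> i; case: (split i).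
rewrite big_split_ord /= scaler_sumr; congr (_ + _); apply: eq_bigr => i _.
  by rewrite (unsplitK (inl _ i)) scalerA.
by rewrite (unsplitK (inr _ i)).
Qed.

Lemma span_ind (S P : V -> Prop) :
  P 0 -> (forall (a : K) x y, P x -> P y -> P (a *: x + y)) ->
  (forall v, S v -> P v) -> forall v, Defs.span S v -> P v.
Proof.
move=> P0 Pcl PS v [n [a [w [Hw ->]]]].
elim: n a w Hw => [|n IH] a w Hw; first by rewrite big_ord0.
rewrite big_ord_recr /= addrC; apply: Pcl; first exact: PS.
exact: IH.
Qed.

Lemma span_mono (S T : V -> Prop) : (forall v, S v -> T v) -> forall v, Defs.span S v -> Defs.span T v.
Proof.
move=> ST; apply: span_ind; [exact: span0 | move=> *; exact: spancl |].
by move=> v Sv; apply: span1; apply: ST.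
Qed.
End Span.

Section Hom.
Variable K : fieldType.
Variables h g : leibniz K.
Variable f : h -> g.
Hypothesis Hf : is_hom f.
Lemma hom0 : f 0 = 0.
Proof.
have := (proj1 Hf) 1 0 0; rewrite !scale1r addr0 => /(congr1 (fun t => t - f 0)).
by rewrite subrr addrK.
Qed.
Lemma homD x y : f (x + y) = f x + f y.
Proof. by have := (proj1 Hf) 1 x y; rewrite !scale1r. Qed.
Lemma homZ a x : f (a *: x) = a *: f x.
Proof. by have := (proj1 Hf) a x 0; rewrite !addr0 hom0 addr0. Qed.
Lemma homN x : f (- x) = - f x.
Proof. by rewrite -scaleN1r homZ scaleN1r. Qed.
Lemma homB x y : f (x - y) = f x - f y.
Proof. by rewrite homD homN. Qed.
Lemma homL x y : f (bra h x y) = bra g (f x) (f y).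
Proof. exact: (proj2 Hf). Qed.
End Hom.


Lemma dir_right (K : fieldType) (g : leibniz K) (X : Type) (F : leibniz K) (iota : X -> F) (pi : F -> g)
  (Hfree : is_free iota) (Hpi : is_hom pi) (Hsurj : surj pi) :
  (forall z : g, precise_ZLie z -> z = 0) ->
  forall x : g, ZLie x -> x != 0 -> sigma_ker_nontrivial pi x.
Proof.
move=> H1 x Zx nx0.
apply: NNPP => Hn.
move/eqP: nx0; apply; apply: H1 => h f [Hf [Hs Hk]].
have [fi Hfi] : exists fi : g -> h, forall b, f (fi b) = b.
  exists (fun b => proj1_sig (constructive_indefinite_description _ (Hs b))).
  by move=> b; case: (constructive_indefinite_description _ _).
have [psi [Hpsi [Hpsi_i _]]] := Hfree h (fun u => fi (pi (iota u))).
have [psi0 [_ [_ U0]]] := Hfree g (fun u => pi (iota u)).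
have fpsi : forall y, f (psi y) = pi y.
  move=> y.
  have hc : is_hom (fun y => f (psi y)).
    split.
      by move=> a x1 y1; rewrite (proj1 Hpsi) (proj1 Hf).
    by move=> x1 y1; rewrite (proj2 Hpsi) (proj2 Hf).
  rewrite (U0 _ hc) ?(U0 _ Hpi) //.
  by move=> u; rewrite Hpsi_i Hfi.
have [u pu] := Hsurj x.
exists (psi u); split; last by rewrite fpsi.
have psi_Wr : forall v, lie_br (fun _ => True) (fun y => pi y = 0) v -> psi v = 0.
  apply: span_ind.
  - exact: (hom0 Hpsi).
  - by move=> a v1 v2 H1' H2'; rewrite (proj1 Hpsi) H1' H2' scaler0 addr0.
  - move=> v [m [n [_ [pn ->]]]].
    rewrite (homD Hpsi) !(homL Hpsi).
    exact: (Hk (psi n) (etrans (fpsi n) pn) (psi m)).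
move=> q.
have [a pa] := Hsurj (f q).
have Zk : ZLie (q - psi a) by apply: Hk; rewrite (homB Hf) fpsi pa subrr.
have -> : q = psi a + (q - psi a) by rewrite addrC subrK.
rewrite braDl braDr addrACA.
have -> : bra h (q - psi a) (psi u) + bra h (psi u) (q - psi a) = 0.
  by rewrite addrC; apply: Zk.
rewrite addr0 -(homL Hpsi) -(homL Hpsi) -(homD Hpsi).
apply: psi_Wr.
apply: NNPP => nW; apply: Hn.
exists (bra F a u + bra F u a); split; [|split; [|split]].
- by rewrite (homD Hpi) !(homL Hpi) pu; apply: Zx.
- by apply: span1; exists a, u.
- exact: nW.
- apply: span1; exists a, u; split=> //; split=> //.
  by move=> I _ Ix; rewrite pu.
Qed.


Lemma dir_left (K : fieldType) (g : leibniz K) (X : Type) (F : leibniz K) (iota : X -> F) (pi : F -> g)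
  (Hfree : is_free iota) (Hpi : is_hom pi) (Hsurj : surj pi) :
  (forall x : g, ZLie x -> x != 0 -> sigma_ker_nontrivial pi x) ->
  forall z : g, precise_ZLie z -> z = 0.
Proof.
move=> H2 z Hz.
apply: NNPP => nz.
have Zz : ZLie z.
  have idc : lie_central_ext (fun y : g => y).
    split; [split=> // | split; [by move=> b; exists b | ]].
    by move=> y -> q; rewrite bra0l bra0r addr0.
  by have [w [Zw <-]] := Hz g _ idc.
have [y [py [_ [nWy sy]]]] := H2 z Zz (introN eqP nz).
pose Wr := lie_br (fun _ => True) (fun y => pi y = 0).
have W0 : Wr 0 := span0 _.
have Wcl : forall (a : K) x y, Wr x -> Wr y -> Wr (a *: x + y).
  by move=> a x1 y1; apply: spancl.
have Wgen : forall m n, pi n = 0 -> Wr (bra F m n + bra F n m).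
  by move=> m n pn; apply: span1; exists m, n.
have HI' : forall v, Wr v -> forall q, Wr (bra F q v) /\ Wr (bra F v q).
  apply: span_ind.
  - by move=> q; rewrite bra0l bra0r.
  - move=> a x1 y1 Hx Hy q; rewrite bra_linl bra_linr.
    by case: (Hx q) => ??; case: (Hy q) => ??; split; apply: Wcl.
  - move=> v [m [n [_ [pn ->]]]] q; split.
      by rewrite bra_sym_r.
    rewrite bra_sym_l; apply: (WD Wcl); apply: Wgen => //.
    by rewrite (homL Hpi) pn bra0l.
have Wpi : forall v, Wr v -> pi v = 0.
  apply: span_ind.
  - exact: (hom0 Hpi).
  - by move=> a v1 v2 H1' H2'; rewrite (proj1 Hpi) H1' H2' scaler0 addr0.
  - move=> v [m [n [_ [pn ->]]]].
    by rewrite (homD Hpi) !(homL Hpi) pn bra0l bra0r addr0.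
pose SW : subsp F := Subsp W0 Wcl.
have HI : forall q v, sW SW v -> sW SW (bra F q v) /\ sW SW (bra F v q).
  by move=> q v Hv; apply: HI'.
pose h := QL HI.
have [f fdef] : exists f : h -> g, forall p, f p = pi (qval p).
  by exists (fun p => pi (qval p)).
have fcl : forall v, f (cl SW v) = pi v.
  move=> v; rewrite fdef /=; apply/eqP; rewrite -subr_eq0 -(homB Hpi).
  by apply/eqP; apply: Wpi; exact: (canonP SW v).
have ext : lie_central_ext f.
  split; [split|split].
  - move=> a; elim/Qind => x1; elim/Qind => y1.
    change (f ((a *: cl SW x1 + cl SW y1 : Q SW)) = a *: f (cl SW x1) + f (cl SW y1)).
    by rewrite -clZ -clD !fcl (proj1 Hpi).
  - elim/Qind => x1; elim/Qind => y1.
    change (f (Qb (cl SW x1) (cl SW y1)) = bra g (f (cl SW x1)) (f (cl SW y1))).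
    by rewrite (QbE HI) !fcl (homL Hpi).
  - by move=> b; have [a pa] := Hsurj b; exists (cl SW a); rewrite fcl.
  - elim/Qind => v; rewrite fcl => pv; elim/Qind => q.
    change (Qb (cl SW q) (cl SW v) + Qb (cl SW v) (cl SW q) = 0).
    rewrite !(QbE HI) -clD; apply/cl_eq0; exact: Wgen.
have [w0 [Zw fw]] := Hz _ f ext.
have [u [Zu fu]] : exists u, ZLie (cl SW u : h) /\ pi u = z.
  by exists (qval w0); rewrite clK -fdef; split.
have Ju : forall a, Wr (bra F a u + bra F u a).
  move=> a; have := Zu (cl SW a).
  change (Qb (cl SW a) (cl SW u) + Qb (cl SW u) (cl SW a) = 0 -> Wr (bra F a u + bra F u a)).
  by rewrite !(QbE HI) -clD; move/cl_eq0.
pose J := fun t => forall m, Wr (bra F m t + bra F t m).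
have WJ : forall v, Wr v -> J v.
  move=> v Hv m; apply: (WD Wcl); [exact: (HI' v Hv m).1 | exact: (HI' v Hv m).2].
have J0 : J 0 := WJ 0 W0.
have Jcl : forall (a : K) x y, J x -> J y -> J (a *: x + y).
  move=> a x1 y1 Jx Jy m; rewrite bra_linl bra_linr addrACA -scalerDr.
  by apply: (Wcl); [exact: Jx | exact: Jy].
have Jr : forall t, pi t = 0 -> J t by move=> t pt m; exact: Wgen.
have Jb1 : forall t b, J t -> J (bra F t b).
  move=> t b Jt m; rewrite bra_sym_ideal; apply: (WB W0 Wcl).
    exact: (HI' _ (Jt m) b).2.
  exact: Jt.
have Jb2 : forall t b, J t -> J (bra F b t).
  move=> t b Jt.
  have -> : bra F b t = (bra F b t + bra F t b) - bra F t b by rewrite addrK.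
  apply: (WB J0 Jcl); [exact: WJ | exact: Jb1].
pose I := fun e => exists t, J t /\ pi t = e.
have Iid : is_ideal I.
  split; [|split].
  - by exists 0; split; [exact: J0 | exact: (hom0 Hpi)].
  - move=> a e1 e2 [t1 [J1 <-]] [t2 [J2 <-]]; exists (a *: t1 + t2); split.
      exact: Jcl.
    exact: (proj1 Hpi).
  - move=> q e [t [Jt <-]]; have [b <-] := Hsurj q; split.
      by exists (bra F b t); split; [exact: Jb2 | exact: (homL Hpi)].
    by exists (bra F t b); split; [exact: Jb1 | exact: (homL Hpi)].
have Iz : I z by exists u; split.
have sI : forall n, gen_ideal z (pi n) -> J n.
  move=> n Hn; have [t [Jt pt]] := Hn I Iid Iz.
  have Jd : J (n - t) by apply: Jr; rewrite (homB Hpi) pt subrr.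
  have -> : n = (n - t) + t by rewrite subrK.
  exact: (WD Jcl Jd Jt).
apply: nWy; move: sy; apply: span_ind.
- exact: (W0).
- by move=> *; apply: (Wcl).
- by move=> v [m [n [_ [sn ->]]]]; exact: (sI n sn m).
Qed.

Unset Implicit Arguments.

Theorem mainTheorem20 (K : fieldType) (two_inv : (2 : K) != 0) (g : leibniz K)
  (X : Type) (F : leibniz K) (iota : X -> F) (pi : F -> g)
  (Hfree : is_free iota) (Hpi : is_hom pi) (Hsurj : surj pi) :
  (forall z : g, precise_ZLie z -> z = 0) <->
  (forall x : g, ZLie x -> x != 0 -> sigma_ker_nontrivial pi x).
Proof.
split.
- exact: (dir_right Hfree Hpi Hsurj).
- exact: (dir_left Hfree Hpi Hsurj).
Qed.
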